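(* Under the standing assumptions, let $\{x_i\}_{i=1}^N$ be a solution of the delayed Hegselmann–Krause system. Then for every $v\in\mathbb{R}^d$, every $T\ge 0$, every $i=1,\dots,N$ and every $t\ge T-\bar\tau$, $$\min_{j=1,\dots,N}\min_{s\in[T-\bar\tau,T]}\langle x_j(s),v\rangle\le\langle x_i(t),v\rangle\le\max_{j=1,\dots,N}\max_{s\in[T-\bar\tau,T]}\langle x_j(s),v\rangle.$$
   Context: Standing assumptions: $N\ge 2$, $d\ge 1$, $\bar\tau>0$; $\tau:[0,\infty)\to[0,\bar\tau]$ continuous; $\psi:\mathbb{R}^d\times\mathbb{R}^d\to\mathbb{R}$ continuous, bounded and strictly positive, $K:=\|\psi\|_\infty$; initial data $x_i^0:[-\bar\tau,0]\to\mathbb{R}^d$ continuous. The delayed Hegselmann–Krause system is $$\frac{d}{dt}x_i(t)=\frac{1}{N-1}\sum_{j\ne i}\psi\big(x_i(t),x_j(t-\tau(t))\big)\big(x_j(t-\tau(t))-x_i(t)\big),\quad t>0,$$ with $x_i=x_i^0$ on $[-\bar\tau,0]$; a solution means continuous $x_i:[-\bar\tau,\infty)\to\mathbb{R}^d$, differentiable on $(0,\infty)$, satisfying this. $\langle\cdot,\cdot\rangle$ is the Euclidean inner product. *)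

(* Defs.v *)
From HB Require Import structures.
From mathcomp Require Import all_boot all_order all_algebra.
From mathcomp Require Import all_classical all_reals all_analysis.
Set Implicit Arguments. Unset Strict Implicit. Unset Printing Implicit Defensive.
Import Order.TTheory GRing.Theory Num.Theory.
Import numFieldNormedType.Exports.
Local Open Scope ring_scope.
Local Open Scope classical_set_scope.

Definition dotv {R : realType} {d : nat} (a b : 'rV[R]_d) : R :=
  \sum_(k < d) a ord0 k * b ord0 k.

Definition hk_rhs {R : realType} {N d : nat} (psi : 'rV[R]_d -> 'rV[R]_d -> R)
  (tau : R -> R) (x : 'I_N -> R -> 'rV[R]_d) (i : 'I_N) (t : R) : 'rV[R]_d :=
  (N.-1)%:R^-1 *: \sum_(j < N | j != i)
     (psi (x i t) (x j (t - tau t)) *: (x j (t - tau t) - x i t)).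

Definition is_hk_solution {R : realType} {N d : nat} (taubar : R)
  (psi : 'rV[R]_d -> 'rV[R]_d -> R) (tau : R -> R)
  (x0 x : 'I_N -> R -> 'rV[R]_d) : Prop :=
  (forall i : 'I_N, {within `[- taubar, +oo[, continuous (x i)}) /\
  (forall (i : 'I_N) (s : R), - taubar <= s <= 0 -> x i s = x0 i s) /\
  (forall (i : 'I_N) (t : R), 0 < t -> is_derive t (1 : R) (x i) (hk_rhs psi tau x i t)).

(* Main.v *)
Require Import Defs.
From HB Require Import structures.
From mathcomp Require Import all_boot all_order all_algebra.
From mathcomp Require Import all_classical all_reals all_analysis.
From mathcomp Require Import lra ring.
Import Order.TTheory GRing.Theory Num.Theory.
Import numFieldNormedType.Exports.
Local Open Scope ring_scope.
Local Open Scope classical_set_scope.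

Section H.
Context {R : realType}.

Lemma finmax (N : nat) (F : 'I_N -> R) (i0 : 'I_N) : exists i, forall j, F j <= F i.
Proof. by case: (@arg_maxP _ _ _ i0 xpredT F isT) => i _ H; exists i => j; exact: H. Qed.

Lemma dotvZ d a (b v : 'rV[R]_d) : dotv (a *: b) v = a * dotv b v.
Proof. by rewrite /dotv mulr_sumr; apply: eq_bigr => k _; rewrite mxE mulrA. Qed.

Lemma dotvB d (a b v : 'rV[R]_d) : dotv (a - b) v = dotv a v - dotv b v.
Proof. by rewrite /dotv -sumrB; apply: eq_bigr => k _; rewrite !mxE mulrBl. Qed.

Lemma dotvN d (a v : 'rV[R]_d) : dotv a (- v) = - dotv a v.
Proof. by rewrite /dotv -sumrN; apply: eq_bigr => k _; rewrite !mxE mulrN. Qed.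

Lemma dotv_sum d (I : finType) (P : pred I) (F : I -> 'rV[R]_d) v :
  dotv (\sum_(j | P j) F j) v = \sum_(j | P j) dotv (F j) v.
Proof.
rewrite /dotv exchange_big; apply: eq_bigr => k _; rewrite summxE mulr_suml //.
Qed.

Lemma cont_sum d n (F : 'I_n -> 'rV[R]_d -> R) : (forall k, continuous (F k)) ->
  continuous (fun a => \sum_(k < n) F k a).
Proof.
elim: n F => [|n IH] F HF.
  rewrite (_ : (fun a => _) = cst 0); first exact: cst_continuous.
  by apply/funext => a; rewrite big_ord0.
rewrite (_ : (fun a => _) = (fun a => \sum_(k < n) F (widen_ord (leqnSn n) k) a) + F ord_max).
  move=> a; apply: continuousD; last exact: HF.
  by apply: IH => k; apply: HF.
by apply/funext => a; rewrite big_ord_recr.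
Qed.

Lemma dotv_cont d (v : 'rV[R]_d) : continuous (fun a : 'rV[R]_d => dotv a v).
Proof.
rewrite /dotv; apply: cont_sum => k a; apply: continuousM; last exact: cst_continuous.
exact: coord_continuous.
Qed.


Lemma dotv_derive d (y : R -> 'rV[R]_d) (t : R) (D v : 'rV[R]_d) :
  is_derive t (1:R) y D -> is_derive t (1:R) (fun s => dotv (y s) v) (dotv D v).
Proof.
move=> [dy <-].
have cv := dy.
have L : (fun h : R => h^-1 *: ((fun s => dotv (y s) v) \o shift t) (h *: 1) - h^-1 *: dotv (y t) v) @ 0^' --> dotv ('D_1 y t) v.
  have := cvg_comp _ _ dy (dotv_cont d v ('D_1 y t)).
  apply: cvg_trans; apply: near_eq_cvg; near=> h => /=.
  by rewrite dotvZ dotvB mulrBr.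
suff H : derivable (fun s => dotv (y s) v) t 1.
  split => //; apply: cvg_lim => //.
  apply: cvg_trans L; apply: near_eq_cvg; near=> h; by rewrite /= -scalerBr.
apply/cvg_ex; exists (dotv ('D_1 y t) v).
apply: cvg_trans L; apply: near_eq_cvg; near=> h; by rewrite /= -scalerBr.
Unshelve. all: by end_near.
Qed.

Lemma left_max_deriv (f : R -> R) (a c l : R) :
  is_derive c (1:R) f l -> a < c -> (forall t, a <= t <= c -> f t <= f c) -> 0 <= l.
Proof.
move=> [df <-] ac cmax.
rewrite ['D_1 f c]cvg_at_leftE; last exact: df.
apply: limr_ge.
  rewrite -(cvg_at_leftE (fun h => h^-1 *: ((f \o shift c) _ - f c))) //.
  apply: cvg_trans df; apply: cvg_app.
  move=> A [e egt0 Ae]; exists e => // x xe xgt0; apply: Ae => //.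
  exact/ltr0_neq0.
near=> h; apply: mulr_le0.
  by rewrite invr_le0; apply: ltW; near: h; exists 1 => /=.
rewrite subr_le0 [_%:A]mulr1; apply: cmax; near: h.
exists (c - a); first by rewrite /= subr_gt0.
move=> h; rewrite /= distrC subr0.
move=> /ltr_normlP []; rewrite ltrBrDl ltrBlDl => H1 _ H2.
by rewrite (ltW H1) /= gerDr ltW.
Unshelve. all: by end_near. Qed.


Lemma upper (N d : nat) (taubar : R) (tau : R -> R) (psi : 'rV[R]_d -> 'rV[R]_d -> R)
  (x : 'I_N -> R -> 'rV[R]_d) (v : 'rV[R]_d) (T : R) :
  (forall t, 0 <= t -> 0 <= tau t <= taubar) ->
  (forall a b, 0 < psi a b) ->
  (forall i, {within `[- taubar, +oo[, continuous (x i)}) ->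
  (forall (i : 'I_N) (t : R), 0 < t -> is_derive t (1 : R) (x i) (hk_rhs psi tau x i t)) ->
  0 <= T -> 0 < taubar ->
  forall (i : 'I_N) (t : R), T - taubar <= t ->
    let S := [set dotv (x j s) v | j in [set: 'I_N] & s in `[T - taubar, T]] in
    dotv (x i t) v <= sup S.
Proof.
move=> htau hpsi hx hder T0 tb0 i t tT /=.
set S := [set _ | _ in _ & _ in _].
set f := fun j s => dotv (x j s) v.
have fc : forall j, {within `[- taubar, +oo[, continuous (f j)}.
  move=> j z; exact: (continuous_comp (hx j z) (dotv_cont d v _)).
have sub1 : forall a b, - taubar <= a -> `[a, b] `<=` `[- taubar, +oo[.
  move=> a b ha s /=; rewrite !in_itv /= andbT => /andP[+ _].
  exact: le_trans.
have Tb : - taubar <= T - taubar by lra.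
have Tl : T - taubar <= T by lra.
have HH : forall j, exists c, c \in `[T - taubar, T]%R /\
   forall s, s \in `[T - taubar, T]%R -> f j s <= f j c.
  move=> j; have [c H1 H2] := EVT_max Tl (continuous_subspaceW (sub1 _ T Tb) (fc j)).
  by exists c; split.
have [c Hc] := boolp.choice HH.
have ub : has_ubound S.
  exists (\sum_j `|f j (c j)|) => _ [j _ [s hs <-]].
  apply: (le_trans ((Hc j).2 s hs)); apply: (le_trans (ler_norm _)).
  rewrite (bigD1 j) //= lerDl; exact: sumr_ge0.
have fle : forall j s, T - taubar <= s <= T -> f j s <= sup S.
  move=> j s hs; apply: ub_le_sup ub _ _; exists j => //; exists s => //.
have [tle|tgt] := leP t T; first by apply: fle; rewrite tT.
rewrite leNgt; apply/negP => Hlt.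
set M := sup S in fle Hlt.
have Hlt' : M < f i t by [].
pose e := (f i t - M) / (2 * (t - T + 1)).
have e0 : 0 < e.
  apply: divr_gt0; [by rewrite subr_gt0 | lra].
pose g := fun s => e * s + (M + e * (1 - T)).
pose phi := fun j s => f j s - g s.
have Tt1 : T <= t by exact: ltW.
have sub2 : `[T, t] `<=` `[- taubar, +oo[.
  apply: sub1; lra.
have HH2 : forall j, exists c, c \in `[T, t]%R /\
   forall s, s \in `[T, t]%R -> phi j s <= phi j c.
  move=> j; have cphi : {within `[T, t], continuous (phi j)}.
    move=> z; apply: continuousB; first exact: (continuous_subspaceW sub2 (fc j)).
    apply: continuous_subspaceT => w; apply: continuousD; last exact: cst_continuous.
    apply: continuousM; [exact: cst_continuous | exact: cvg_id].
  have [c0 H1 H2] := EVT_max Tt1 cphi.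
  by exists c0; split.
have [c' Hc'] := boolp.choice HH2.
have [k Hk] := finmax _ (fun j => phi j (c' j)) i.
set cc := c' k.
set m := phi k cc.
have m0 : 0 < m.
  have : phi i t <= m.
    apply: le_trans (Hk i); apply: (Hc' i).2; rewrite in_itv /= Tt1 lexx //.
  suff : 0 < phi i t by lra.
  have hb : t - T + 1 != 0 by apply: lt0r_neq0; lra.
  have -> : phi i t = (f i t - M) / 2.
    by rewrite /phi /g /e; field.
  lra.
have [Tcc cct] : T <= cc /\ cc <= t.
  by have := (Hc' k).1; rewrite in_itv /= => /andP.
have gT : g T = M + e by rewrite /g; ring.
have Tcc' : T < cc.
  rewrite lt_neqAle Tcc andbT; apply/eqP => eq.
  have : f k T <= M by apply: fle; rewrite lexx andbT; lra.
  have : m = f k T - g T by rewrite /m -eq.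
  lra.
have cc0 : 0 < cc by lra.
pose D := dotv (hk_rhs psi tau x k cc) v.
have hf := @dotv_derive d (x k) cc _ v (hder k cc cc0).
have hg : is_derive cc (1:R) g (e * 1 + 0).
  rewrite /g; apply: is_deriveD.
have hd : is_derive cc (1:R) (phi k) (D - (e * 1 + 0)).
  exact: is_deriveB.
have hmax : forall s, T <= s <= cc -> phi k s <= phi k cc.
  move=> s /andP[h1 h2]; apply: (Hc' k).2; rewrite in_itv /= h1 /=.
  exact: le_trans h2 cct.
have := @left_max_deriv _ T _ _ hd Tcc' hmax.
suff : D <= 0 by lra.
rewrite /D /hk_rhs dotvZ dotv_sum; apply: mulr_ge0_le0.
  by rewrite invr_ge0.
apply: sumr_le0 => j _; rewrite dotvZ dotvB; apply: mulr_ge0_le0; first exact: ltW.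
rewrite subr_le0.
have [tau0 taub] : 0 <= tau cc /\ tau cc <= taubar by apply/andP; apply: htau; lra.
have fkc : f k cc = m + g cc by rewrite /m /phi; ring.
have [uT|uT] := leP T (cc - tau cc).
  have : phi j (cc - tau cc) <= m.
    apply: le_trans (Hk j); apply: (Hc' j).2; rewrite in_itv /= uT /=; lra.
  have : g (cc - tau cc) <= g cc.
    by rewrite /g lerD2r; apply: ler_wpM2l; [exact: ltW | lra].
  rewrite /phi -/(f j (cc - tau cc)) -/(f k cc); lra.
have : f j (cc - tau cc) <= M by apply: fle; apply/andP; split; lra.
have : M <= g cc.
  rewrite /g; have : 0 <= e * (cc - T) by apply: mulr_ge0; lra.
  lra.
rewrite -/(f j (cc - tau cc)) -/(f k cc); lra.
Qed.

End H.

Theorem lemma2p1 (R : realType) (N d : nat) (taubar : R)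
  (tau : R -> R) (psi : 'rV[R]_d -> 'rV[R]_d -> R)
  (x0 x : 'I_N -> R -> 'rV[R]_d) :
  (2 <= N)%N -> (1 <= d)%N -> 0 < taubar ->
  {within `[0, +oo[, continuous tau} ->
  (forall t, 0 <= t -> 0 <= tau t <= taubar) ->
  continuous (fun p : 'rV[R]_d * 'rV[R]_d => psi p.1 p.2) ->
  (exists K : R, forall a b, `|psi a b| <= K) ->
  (forall a b, 0 < psi a b) ->
  (forall i, {within `[- taubar, 0], continuous (x0 i)}) ->
  is_hk_solution taubar psi tau x0 x ->
  forall (v : 'rV[R]_d) (T : R), 0 <= T ->
  forall (i : 'I_N) (t : R), T - taubar <= t ->
    let S := [set dotv (x j s) v | j in [set: 'I_N] & s in `[T - taubar, T]] in
    inf S <= dotv (x i t) v <= sup S.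
Proof.
move=> N2 d1 tb0 _ htau _ _ hpsi _ [hx [_ hder]] v T T0 i t tT /=.
apply/andP; split; last exact: upper.
set S := [set _ | _ in _ & _ in _].
rewrite /inf.
have -> : -%R @` S =
   [set dotv (x j s) (- v) | j in [set: 'I_N] & s in `[T - taubar, T]].
  apply/seteqP; split => z /=.
    move=> [y [j _ [s hs <-]] <-]; exists j => //; exists s => //.
    by rewrite dotvN.
  move=> [j _ [s hs <-]]; exists (dotv (x j s) v).
    by exists j => //; exists s.
  by rewrite dotvN.
rewrite lerNl.
have := @upper R N d taubar tau psi x (- v) T htau hpsi hx hder T0 tb0 i t tT.
by rewrite dotvN.
Qed.
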